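(* Let $L^2_0(B)$ denote the vector space $B$ with inner product $\langle b,b'\rangle=\Phi_A(b^*b')$. Then $L^2_0(B)\in{}_B\mathrm{Rep}^A$, with $B$ acting by left multiplication and the right $A$-comodule structure $\alpha_B=\Delta_A|_B$.
   Context: $A$ is a CQG Hopf $*$-algebra: a complex Hopf algebra $(A,\Delta_A,\varepsilon_A,S_A)$ with an anti-linear involution making it a $*$-algebra with $\Delta_A$ a $*$-homomorphism, admitting a state $\Phi_A$ with $(\Phi_A\otimes\mathrm{id})\Delta_A(a)=\Phi_A(a)1=(\mathrm{id}\otimes\Phi_A)\Delta_A(a)$ (it is faithful). Put $a^\dagger=S_A(a)^*$. $B\subseteq A$ is a unital right coideal $*$-subalgebra, i.e. $\Delta_A(B)\subseteq B\odot A$. ${}_B\mathrm{Rep}^A$: left $B$-modules $V$ with right $A$-comodule structure $v\mapsto v_{(0)}\otimes v_{(1)}$ satisfying $(bv)_{(0)}\otimes(bv)_{(1)}=b_{(1)}v_{(0)}\otimes b_{(2)}v_{(1)}$, which are pre-Hilbert spaces with $\langle v,bw\rangle=\langle b^*v,w\rangle$ and $\langle v,w_{(0)}\rangle w_{(1)}=\langle v_{(0)},w\rangle v_{(1)}^\dagger$ for all $v,w\in V$, $b\in B$. *)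

(* Defs.v *)
From HB Require Import structures.
From mathcomp Require Import all_boot all_order all_algebra.
Set Implicit Arguments. Unset Strict Implicit. Unset Printing Implicit Defensive.
Import Order.TTheory GRing.Theory Num.Theory.
Local Open Scope ring_scope.

(* Scalars: C is a numeric closed field (with conjugation Num.conj and the   *)
(* positivity order); the complex numbers are the motivating instance.       *)
(* Algebraic tensor products V (.) W are encoded by finite lists of pairs     *)
(* (Sweedler-style representatives) sum_i v_i (x) w_i.  Two representatives  *)
(* denote the same tensor iff all linear functionals f (x) g agree on them;   *)
(* over a field this is exactly equality in V (x) W.                          *)

Section Tensor.
Variable C : numClosedFieldType.

Definition tensor (V W : Type) := seq (V * W).

Definition tev (V W : lmodType C) (f : {scalar V}) (g : {scalar W})
  (t : tensor V W) : C := \sum_(p <- t) f p.1 * g p.2.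

Definition teq (V W : lmodType C) (t t' : tensor V W) : Prop :=
  forall (f : {scalar V}) (g : {scalar W}), tev f g t = tev f g t'.

Definition tlin (V W : lmodType C) (t : tensor V W) (k : C) (t' : tensor V W)
  : tensor V W := t ++ [seq (k *: p.1, p.2) | p <- t'].

Definition tin_left (V W : Type) (P : {pred V}) (t : tensor V W) : bool :=
  all (fun p => p.1 \in P) t.
End Tensor.

Section Hopf.
Variable C : numClosedFieldType.
Variable A : algType C.
Variables (st : A -> A) (Delta : A -> tensor A A) (eps : A -> C)
          (S : A -> A) (Phi : A -> C).

Definition dagger (a : A) : A := st (S a).

Definition is_Hopf_algebra : Prop :=
  [/\
      [/\ (forall a b (k : C), teq (Delta (a + k *: b)) (tlin (Delta a) k (Delta b))),
          teq (Delta 1) [:: (1, 1)] &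
          (forall a b, teq (Delta (a * b))
                    [seq (p.1 * q.1, p.2 * q.2) | p <- Delta a, q <- Delta b])],
      (* coassociativity: (Delta (x) id) Delta = (id (x) Delta) Delta *)
      (forall a (f g h : {scalar A}),
          \sum_(p <- Delta a) tev f g (Delta p.1) * h p.2
        = \sum_(p <- Delta a) f p.1 * tev g h (Delta p.2)),
      [/\ (forall a b (k : C), eps (a + k *: b) = eps a + k * eps b),
          eps 1 = 1,
          (forall a b, eps (a * b) = eps a * eps b),
          (forall a, \sum_(p <- Delta a) eps p.1 *: p.2 = a) &
          (forall a, \sum_(p <- Delta a) eps p.2 *: p.1 = a)] &
      [/\ (forall a b (k : C), S (a + k *: b) = S a + k *: S b),
          (forall a, \sum_(p <- Delta a) S p.1 * p.2 = eps a *: 1) &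
          (forall a, \sum_(p <- Delta a) p.1 * S p.2 = eps a *: 1)]].

Definition is_star_structure : Prop :=
  [/\ (forall a, st (st a) = a),
      (forall a b (k : C), st (a + k *: b) = st a + (Num.conj k) *: st b),
      (forall a b, st (a * b) = st b * st a) &
      (forall a, teq (Delta (st a)) [seq (st p.1, st p.2) | p <- Delta a])].

Definition is_state : Prop :=
  [/\ (forall a b (k : C), Phi (a + k *: b) = Phi a + k * Phi b),
      Phi 1 = 1 &
      (forall a, 0 <= Phi (st a * a))].

Definition is_faithful : Prop := forall a, Phi (st a * a) = 0 -> a = 0.

Definition is_Haar : Prop :=
  (forall a, \sum_(p <- Delta a) Phi p.1 *: p.2 = Phi a *: 1) /\
  (forall a, \sum_(p <- Delta a) Phi p.2 *: p.1 = Phi a *: 1).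

Definition is_CQG_Hopf_star : Prop :=
  [/\ is_Hopf_algebra, is_star_structure, is_state, is_faithful & is_Haar].

Definition is_right_coideal_star_subalg (B : {pred A}) : Prop :=
  [/\ 1 \in B,
      (forall b c (k : C), b \in B -> c \in B -> b + k *: c \in B),
      (forall b c, b \in B -> c \in B -> b * c \in B),
      (forall b, b \in B -> st b \in B) &
      (forall b, b \in B -> exists t, teq (Delta b) t /\ tin_left B t)].

(* complex vector space W (any vector space is a subspace of itself).        *)
(*   coact v     : the right A-coaction v |-> v_(0) (x) v_(1) (a tensor      *)
(*                 representative, required to lie in V (.) A up to teq),    *)
(*   ip v w      : the inner product <v, w> (anti-linear in v).              *)
Definition in_BRep (B : {pred A}) (W : lmodType C) (V : {pred W})
  (act : A -> W -> W) (coact : W -> tensor W A) (ip : W -> W -> C) : Prop :=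
  let good t v := teq t (coact v) /\ tin_left V t in
  [/\
      0 \in V /\ (forall v w (k : C), v \in V -> w \in V -> v + k *: w \in V),
      [/\ (forall b v, b \in B -> v \in V -> act b v \in V),
          (forall b v w (k : C), b \in B -> v \in V -> w \in V ->
              act b (v + k *: w) = act b v + k *: act b w),
          (forall b c v (k : C), b \in B -> c \in B -> v \in V ->
              act (b + k *: c) v = act b v + k *: act c v),
          (forall v, v \in V -> act 1 v = v) &
          (forall b c v, b \in B -> c \in B -> v \in V ->
              act (b * c) v = act b (act c v))],
      [/\ (forall v, v \in V -> exists t, good t v),
          (forall v w (k : C), v \in V -> w \in V ->
              teq (coact (v + k *: w)) (tlin (coact v) k (coact w))),
          (forall v t (f : {scalar W}) (g h : {scalar A}), v \in V -> good t v ->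
                \sum_(p <- t) tev f g (coact p.1) * h p.2
              = \sum_(p <- t) f p.1 * tev g h (Delta p.2)) &
          (forall v t, v \in V -> good t v ->
              \sum_(p <- t) eps p.2 *: p.1 = v)],
      (forall b v tb tv, b \in B -> v \in V ->
          teq tb (Delta b) -> tin_left B tb -> good tv v ->
          teq (coact (act b v))
              [seq (act p.1 q.1, p.2 * q.2) | p <- tb, q <- tv]) &
   [/\
      [/\ (forall u v w (k : C), u \in V -> v \in V -> w \in V ->
              ip u (v + k *: w) = ip u v + k * ip u w),
          (forall v w, v \in V -> w \in V -> ip w v = Num.conj (ip v w)) &
          (forall v, v \in V -> v != 0 -> 0 < ip v v)],
      (forall b v w, b \in B -> v \in V -> w \in V ->
          ip v (act b w) = ip (act (st b) v) w) &
      (forall v w tv tw, v \in V -> w \in V -> good tv v -> good tw w ->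
          \sum_(p <- tw) ip v p.1 *: p.2
        = \sum_(p <- tv) ip p.1 w *: dagger p.2)]].

End Hopf.

(* Main.v *)
Require Import Defs.
From HB Require Import structures.
From mathcomp Require Import all_boot all_order all_algebra.
From mathcomp Require Import ring.
Import Order.TTheory GRing.Theory Num.Theory.
Local Open Scope ring_scope.

Set Implicit Arguments. Unset Strict Implicit.

Section MkS.
Variables (C : numClosedFieldType) (V : lmodType C) (F : V -> C).
Hypothesis HF : forall a b (k : C), F (a + k *: b) = F a + k * F b.
Definition mkSf := F.
Lemma mkS_lin : linear_for *%R mkSf.
Proof. move=> k a b; rewrite /mkSf [k *: a + b]addrC HF addrC. by []. Qed.
HB.instance Definition _ := GRing.isLinear.Build C V C *%R mkSf mkS_lin.
Definition mkS : {scalar V} := mkSf.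
Lemma mkSE x : mkS x = F x. Proof. by []. Qed.

Lemma lin0 : F 0 = 0.
Proof. by rewrite -(mkSE 0) linear0. Qed.
Lemma linD a b : F (a + b) = F a + F b.
Proof. by rewrite -!(mkSE) linearD. Qed.
Lemma linZ k a : F (k *: a) = k * F a.
Proof. by rewrite -!(mkSE) linearZ. Qed.
Lemma linN a : F (- a) = - F a.
Proof. by rewrite -!(mkSE) linearN. Qed.
Lemma linB a b : F (a - b) = F a - F b.
Proof. by rewrite -!(mkSE) linearB. Qed.
Lemma linsum (I : Type) (s : seq I) (k : I -> C) (v : I -> V) :
  F (\sum_(i <- s) k i *: v i) = \sum_(i <- s) k i * F (v i).
Proof.
elim: s => [|i s IH]; first by rewrite !big_nil lin0.
by rewrite !big_cons linD linZ IH.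
Qed.
End MkS.

Lemma scal_lin (C : numClosedFieldType) (V : lmodType C) (f : {scalar V}) :
  forall a b (k : C), f (a + k *: b) = f a + k * f b.
Proof. by move=> a b k; rewrite linearD linearZ. Qed.

Section Conj.
Variable C : numClosedFieldType.
Lemma cD (a b : C) : Num.conj (a + b) = Num.conj a + Num.conj b.
Proof. exact: rmorphD. Qed.
Lemma cM (a b : C) : Num.conj (a * b) = Num.conj a * Num.conj b.
Proof. exact: rmorphM. Qed.
Lemma cN (a : C) : Num.conj (- a) = - Num.conj a.
Proof. exact: rmorphN. Qed.
Lemma c1 : Num.conj (1 : C) = 1.
Proof. exact: rmorph1. Qed.
Lemma csum (I : Type) (s : seq I) (F : I -> C) :
  Num.conj (\sum_(i <- s) F i) = \sum_(i <- s) Num.conj (F i).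
Proof.
elim: s => [|i s IH]; first by rewrite !big_nil; exact: rmorph0.
by rewrite !big_cons cD IH.
Qed.
End Conj.

Section Gen.
Variables (C : numClosedFieldType) (A : algType C).
Variables (st : A -> A) (Phi : A -> C).
Hypothesis PhiL : forall a b (k : C), Phi (a + k *: b) = Phi a + k * Phi b.
Hypothesis stK : forall a, st (st a) = a.
Hypothesis stL : forall a b (k : C), st (a + k *: b) = st a + (Num.conj k) *: st b.
Hypothesis stM : forall a b, st (a * b) = st b * st a.
Hypothesis Phipos : forall a, 0 <= Phi (st a * a).
Hypothesis faith : forall a, Phi (st a * a) = 0 -> a = 0.

Lemma PhiD a b : Phi (a + b) = Phi a + Phi b. Proof. exact: linD. Qed.
Lemma PhiZ k a : Phi (k *: a) = k * Phi a. Proof. exact: linZ. Qed.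
Lemma PhiB a b : Phi (a - b) = Phi a - Phi b. Proof. exact: linB. Qed.

Lemma ip_lin x : forall a b (k : C),
  Phi (st x * (a + k *: b)) = Phi (st x * a) + k * Phi (st x * b).
Proof. by move=> a b k; rewrite mulrDr -scalerAr PhiL. Qed.

Definition ipS x := mkS (ip_lin x).

Lemma sep X Y : (forall g : {scalar A}, g X = g Y) -> X = Y.
Proof.
move=> H; apply/eqP; rewrite -subr_eq0; apply/eqP/faith.
have := H (ipS (X - Y)); rewrite /ipS !mkSE => e.
by rewrite mulrBr PhiB e subrr.
Qed.

Lemma CS v w : Phi (st w * v) = Num.conj (Phi (st v * w)).
Proof.
have R a : Num.conj (Phi (st a * a)) = Phi (st a * a) := geC0_conj (Phipos a).
set x := Phi (st v * w); set y := Phi (st w * v).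
have E k : Phi (st (v + k *: w) * (v + k *: w)) =
   Phi (st v * v) + (k * x + Num.conj k * y) + Num.conj k * k * Phi (st w * w).
  rewrite stL mulrDl !mulrDr -!scalerAl -!scalerAr !PhiD !PhiZ /x /y; ring.
have F k : Num.conj (k * x + Num.conj k * y) = k * x + Num.conj k * y.
  have := R (v + k *: w); rewrite E cD cD R [Num.conj (_ * _ * _)]cM cM conjCK R.
  by rewrite [k * _]mulrC; move/addIr/addrI.
have e1 := F 1; rewrite c1 !mul1r cD in e1.
have e2 := F 'i; rewrite conjCi cD !cM cN conjCi opprK in e2.
have n2i : (2 * 'i : C) != 0 by rewrite mulf_neq0 ?neq0Ci // pnatr_eq0.
apply: (mulfI n2i); apply/eqP; rewrite -subr_eq0.
have -> : 2 * 'i * y - 2 * 'i * Num.conj x =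
  ('i * (x + y) - 'i * (Num.conj x + Num.conj y)) -
  (('i * x + - 'i * y) - (- 'i * Num.conj x + 'i * Num.conj y)) by ring.
by rewrite e1 e2 !subrr ?subr0.
Qed.

Definition blin (F : A -> A -> C) :=
  (forall x y y' (k : C), F x (y + k *: y') = F x y + k * F x y') /\
  (forall x x' y (k : C), F (x + k *: x') y = F x y + k * F x' y).

Lemma sep0 Y : (forall g : {scalar A}, g Y = 0) -> Y = 0.
Proof. by move=> H; apply: sep => g; rewrite H linear0. Qed.

Lemma bil0 (t : seq (A * A)) :
  (forall f g : {scalar A}, tev f g t = 0) ->
  forall F, blin F -> \sum_(p <- t) F p.1 p.2 = 0.
Proof.
have [n] := ubnP (size t); elim: n t => // n IHn [|[x y] t] ltn H F [F2 F1];
  first by rewrite big_nil.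
have IH : forall t2, size t2 = size t -> (forall f g : {scalar A}, tev f g t2 = 0) ->
   forall F, blin F -> \sum_(p <- t2) F p.1 p.2 = 0.
  by move=> t2 e; apply: IHn; rewrite e; exact: ltn.
rewrite big_cons /=.
have F0y z : F 0 z = 0 by apply: (lin0 (F := F^~ z)) => a b k; apply: F1.
case: (eqVneq x 0) => [x0 | nx].
  rewrite x0 F0y add0r; apply: IH => // f g; have := H f g.
  by rewrite x0 /tev big_cons /= raddf0 mul0r add0r.
set d := Phi (st x * x).
have dn : d != 0 by apply: contra_neq nx => /faith.
pose c u := Phi (st x * u) / d.
have cL : forall a b (k : C), c (a + k *: b) = c a + k * c b.
  by move=> a b k; rewrite /c ip_lin mulrDl mulrA.
pose cS := mkS cL.
have cx : c x = 1 by rewrite /c divff.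
set Y := y + \sum_(p <- t) c p.1 *: p.2.
have gY (g : {scalar A}) : g Y = g y + \sum_(p <- t) c p.1 * g p.2.
  by rewrite linearD linear_sum; congr (_ + _); apply: eq_bigr => p _; rewrite linearZ.
have HY : Y = 0.
  apply: sep0 => g; rewrite gY; have := H cS g.
  by rewrite /tev big_cons /= /mkSf cx mul1r.
pose t2 := [seq (p.1 - c p.1 *: x, p.2) | p <- t].
have IH2 := IH t2 (size_map _ _).
have H2 : forall f g : {scalar A}, tev f g t2 = 0.
  move=> f g; rewrite /tev big_map /=.
  have e1 := H f g; rewrite /tev big_cons /= in e1.
  have e2 : g Y = 0 by rewrite HY linear0.
  rewrite gY in e2.
  have -> : \sum_(p <- t) f (p.1 - c p.1 *: x) * g p.2 =
    \sum_(p <- t) f p.1 * g p.2 - f x * \sum_(p <- t) c p.1 * g p.2.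
    rewrite mulr_sumr -sumrB; apply: eq_bigr => p _.
    by rewrite linearB linearZ /= mulrBl; congr (_ - _); ring.
  have -> : \sum_(p <- t) f p.1 * g p.2 = - (f x * g y).
    by apply/eqP; rewrite -addr_eq0 addrC e1.
  have -> : \sum_(p <- t) c p.1 * g p.2 = - g y.
    by apply/eqP; rewrite -addr_eq0 addrC e2.
  by rewrite mulrN opprK addrC subrr.
have S2 := IH2 H2 F (conj F2 F1); rewrite big_map /= in S2.
have -> : \sum_(p <- t) F p.1 p.2 =
   \sum_(p <- t) F (p.1 - c p.1 *: x) p.2 + \sum_(p <- t) c p.1 * F x p.2.
  rewrite -big_split; apply: eq_bigr => p _ /=.
  by rewrite -F1 -addrA [- _ + _]addrC subrr addr0.
rewrite S2 add0r.
have -> : F x y + \sum_(p <- t) c p.1 * F x p.2 = F x Y.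
  by rewrite /Y (linD (F2 x)) (linsum (F2 x)).
by rewrite HY (lin0 (F2 x)).
Qed.

Lemma teq_bil (t t' : seq (A * A)) : teq t t' ->
  forall F, blin F -> \sum_(p <- t) F p.1 p.2 = \sum_(p <- t') F p.1 p.2.
Proof.
move=> H F [F2 F1].
have H0 : forall f g : {scalar A}, tev f g (t ++ [seq (- p.1, p.2) | p <- t']) = 0.
  move=> f g; rewrite /tev big_cat big_map /=.
  under [X in _ + X]eq_bigr do rewrite linearN mulNr.
  by rewrite sumrN; have := H f g; rewrite /tev => ->; rewrite subrr.
have := bil0 H0 (conj F2 F1).
rewrite big_cat big_map /=.
have FN a b : F (- a) b = - F a b.
  by apply: (linN (F := F^~ b)) => ? ? ?; apply: F1.
under [X in _ + X]eq_bigr do rewrite FN.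
by rewrite sumrN => /eqP; rewrite subr_eq0 => /eqP.
Qed.

End Gen.

Section Hopf.
Variables (C : numClosedFieldType) (A : algType C).
Variables (st : A -> A) (Delta : A -> tensor A A) (eps : A -> C)
          (S : A -> A) (Phi : A -> C).
Hypothesis DL : forall a b (k : C), teq (Delta (a + k *: b)) (tlin (Delta a) k (Delta b)).
Hypothesis DM : forall a b, teq (Delta (a * b))
                    [seq (p.1 * q.1, p.2 * q.2) | p <- Delta a, q <- Delta b].
Hypothesis CA : forall a (f g h : {scalar A}),
          \sum_(p <- Delta a) tev f g (Delta p.1) * h p.2
        = \sum_(p <- Delta a) f p.1 * tev g h (Delta p.2).
Hypothesis eL : forall a b (k : C), eps (a + k *: b) = eps a + k * eps b.
Hypothesis cnt2 : forall a, \sum_(p <- Delta a) eps p.2 *: p.1 = a.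
Hypothesis SL : forall a b (k : C), S (a + k *: b) = S a + k *: S b.
Hypothesis anti2 : forall a, \sum_(p <- Delta a) p.1 * S p.2 = eps a *: 1.
Hypothesis stK : forall a, st (st a) = a.
Hypothesis stL : forall a b (k : C), st (a + k *: b) = st a + (Num.conj k) *: st b.
Hypothesis stM : forall a b, st (a * b) = st b * st a.
Hypothesis Dst : forall a, teq (Delta (st a)) [seq (st p.1, st p.2) | p <- Delta a].
Hypothesis PhiL : forall a b (k : C), Phi (a + k *: b) = Phi a + k * Phi b.
Hypothesis Phipos : forall a, 0 <= Phi (st a * a).
Hypothesis faith : forall a, Phi (st a * a) = 0 -> a = 0.
Hypothesis HL : forall a, \sum_(p <- Delta a) Phi p.1 *: p.2 = Phi a *: 1.

Lemma teq_trans (t1 t2 t3 : tensor A A) : teq t1 t2 -> teq t2 t3 -> teq t1 t3.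
Proof. by move=> h1 h2 f g; rewrite h1 h2. Qed.
Lemma teq_sym (t1 t2 : tensor A A) : teq t1 t2 -> teq t2 t1.
Proof. by move=> h1 f g; rewrite h1. Qed.

Lemma tev_tlin (f g : {scalar A}) t k t' :
  tev f g (tlin t k t') = tev f g t + k * tev f g t'.
Proof.
rewrite /tev /tlin big_cat big_map /= mulr_sumr; congr (_ + _).
by apply: eq_bigr => p _; rewrite linearZ /= mulrA.
Qed.

Lemma tevD_lin (f g : {scalar A}) : forall a b (k : C),
  tev f g (Delta (a + k *: b)) = tev f g (Delta a) + k * tev f g (Delta b).
Proof. by move=> a b k; rewrite DL tev_tlin. Qed.

Lemma mulL_lin (f : {scalar A}) (c : A) : forall a b (k : C),
  f (c * (a + k *: b)) = f (c * a) + k * f (c * b).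
Proof. by move=> a b k; rewrite mulrDr -scalerAr scal_lin. Qed.
Lemma mulR_lin (f : {scalar A}) (c : A) : forall a b (k : C),
  f ((a + k *: b) * c) = f (a * c) + k * f (b * c).
Proof. by move=> a b k; rewrite mulrDl -scalerAl scal_lin. Qed.

Lemma teq_pairs (s s' u u' : tensor A A) : teq s s' -> teq u u' ->
  teq [seq (p.1 * q.1, p.2 * q.2) | p <- s, q <- u]
      [seq (p.1 * q.1, p.2 * q.2) | p <- s', q <- u'].
Proof.
move=> Hs Hu f g; rewrite /tev !big_allpairs_dep /=.
transitivity (\sum_(p <- s) \sum_(q <- u') f (p.1 * q.1) * g (p.2 * q.2)).
  apply: eq_bigr => p _.
  have := Hu (mkS (mulL_lin f p.1)) (mkS (mulL_lin g p.2)).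
  by rewrite /tev /mkS /mkSf.
rewrite exchange_big [in RHS]exchange_big /=; apply: eq_bigr => q _.
have := Hs (mkS (mulR_lin f q.1)) (mkS (mulR_lin g q.2)).
by rewrite /tev /mkS /mkSf.
Qed.

Lemma CG v (f : {scalar A}) (psi : A -> A -> C) : blin psi ->
  \sum_(p <- Delta v) \sum_(a <- Delta p.1) f a.1 * psi a.2 p.2 =
  \sum_(p <- Delta v) f p.1 * \sum_(a <- Delta p.2) psi a.1 a.2.
Proof.
move=> [P2 P1].
have E : teq [seq (f a.1 *: a.2, p.2) | p <- Delta v, a <- Delta p.1]
             [seq (f p.1 *: a.1, a.2) | p <- Delta v, a <- Delta p.2].
  move=> g h; rewrite /tev !big_allpairs_dep /=.
  transitivity (\sum_(p <- Delta v) tev f g (Delta p.1) * h p.2).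
    rewrite /tev; apply: eq_bigr => p _; rewrite mulr_suml; apply: eq_bigr => a _.
    by rewrite linearZ.
  rewrite CA /tev; apply: eq_bigr => p _; rewrite mulr_sumr; apply: eq_bigr => a _.
  by rewrite linearZ /= mulrA.
have := teq_bil PhiL faith E (conj P2 P1).
rewrite !big_allpairs_dep /= => e.
transitivity (\sum_(p <- Delta v) \sum_(a <- Delta p.1) psi (f a.1 *: a.2) p.2).
  apply: eq_bigr => p _; apply: eq_bigr => a _.
  by rewrite (linZ (F := psi^~ p.2)) // => ? ? ?; apply: P1.
rewrite e; apply: eq_bigr => p _; rewrite mulr_sumr; apply: eq_bigr => a _.
by rewrite (linZ (F := psi^~ a.2)) // => ? ? ?; apply: P1.
Qed.

Lemma Kp v w (k : {scalar A}) :
  \sum_(p <- Delta v) Phi (st w * p.1) * k (S p.2) =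
  \sum_(b <- Delta w) Phi (st b.1 * v) * k (st b.2).
Proof.
transitivity (\sum_(p <- Delta v) \sum_(r <- Delta (st w * p.1))
                  Phi r.1 * k (r.2 * S p.2)).
  apply: eq_bigr => p _.
  have e : Phi (st w * p.1) *: S p.2 =
      \sum_(r <- Delta (st w * p.1)) Phi r.1 *: (r.2 * S p.2).
    rewrite -{1}[S p.2]mul1r scalerAl -HL mulr_suml.
    by apply: eq_bigr => r _; rewrite -scalerAl.
  have := congr1 k e; rewrite linearZ linear_sum /= => ->.
  by apply: eq_bigr => r _; rewrite linearZ.
transitivity (\sum_(p <- Delta v) \sum_(b <- Delta w) \sum_(a <- Delta p.1)
     Phi (st b.1 * a.1) * k (st b.2 * a.2 * S p.2)).
  apply: eq_bigr => p _.
  have T : teq (Delta (st w * p.1))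
     [seq (q.1 * a.1, q.2 * a.2) | q <- [seq (st b.1, st b.2) | b <- Delta w],
                                    a <- Delta p.1].
    apply: teq_trans (DM _ _) _; apply: teq_pairs; [exact: Dst | by move=> ? ?].
  have := T (mkS PhiL) (mkS (mulR_lin k (S p.2))); rewrite /tev /mkS /mkSf => ->.
  by rewrite big_allpairs_dep big_map /=.
transitivity (\sum_(b <- Delta w) \sum_(p <- Delta v) \sum_(a <- Delta p.1)
     Phi (st b.1 * a.1) * k (st b.2 * a.2 * S p.2)); first exact: exchange_big.
apply: eq_bigr => b _.
have Bl : blin (fun y z => k (st b.2 * y * S z)).
  split => x y y' c.
    by rewrite SL mulrDr -scalerAr scal_lin.
  by rewrite mulrDr -scalerAr mulrDl -scalerAl scal_lin.
have e := CG v (ipS st PhiL b.1) Bl; rewrite /ipS /mkS /mkSf /= in e; rewrite e.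
transitivity (\sum_(p <- Delta v) Phi (st b.1 * p.1) * (eps p.2 * k (st b.2))).
  apply: eq_bigr => p _; congr (_ * _); rewrite -linear_sum /=.
  under eq_bigr do rewrite -mulrA.
  by rewrite -mulr_sumr anti2 -scalerAr mulr1 linearZ.
rewrite -[in RHS](cnt2 v) (linsum (ip_lin st PhiL b.1)) mulr_suml.
by apply: eq_bigr => p _; ring.
Qed.

Lemma Kvec v w (tv tw : tensor A A) : teq tv (Delta v) -> teq tw (Delta w) ->
  \sum_(p <- tw) Phi (st v * p.1) *: p.2 =
  \sum_(p <- tv) Phi (st p.1 * w) *: st (S p.2).
Proof.
move=> Hv Hw; apply: (sep PhiL faith) => h.
rewrite !linear_sum /=.
under eq_bigr do rewrite linearZ /=.
under [in RHS]eq_bigr do rewrite linearZ /=.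
have kL : forall a b (c : C), Num.conj (h (st (a + c *: b))) =
    Num.conj (h (st a)) + c * Num.conj (h (st b)).
  by move=> a b c; rewrite stL scal_lin cD cM conjCK.
pose k := mkS kL.
have SkL : forall a b (c : C), k (S (a + c *: b)) = k (S a) + c * k (S b).
  by move=> a b c; rewrite SL scal_lin.
transitivity (\sum_(p <- Delta w) Phi (st v * p.1) * h p.2).
  by have := Hw (ipS st PhiL v) h; rewrite /tev /ipS /mkS /mkSf.
have R1 : \sum_(p <- tv) Phi (st p.1 * w) * h (st (S p.2)) =
    Num.conj (\sum_(p <- Delta v) Phi (st w * p.1) * k (S p.2)).
  have := Hv (ipS st PhiL w) (mkS SkL); rewrite /tev /ipS /mkS /mkSf => <-.
  rewrite csum; apply: eq_bigr => p _.
  have E1 : Num.conj (Phi (st w * p.1)) = Phi (st p.1 * w).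
    by rewrite (CS PhiL stL Phipos p.1 w) conjCK.
  have E2 : Num.conj (k (S p.2)) = h (st (S p.2)) by rewrite /k /mkS /mkSf conjCK.
  by rewrite cM -E1 -E2.
rewrite R1 Kp csum; apply: eq_bigr => p _.
have E1 : Num.conj (Phi (st p.1 * v)) = Phi (st v * p.1).
  by rewrite (CS PhiL stL Phipos v p.1) conjCK.
have E2 : Num.conj (k (st p.2)) = h p.2 by rewrite /k /mkS /mkSf conjCK stK.
by rewrite cM E1 E2.
Qed.

Variable B : {pred A}.
Hypothesis B1 : 1 \in B.
Hypothesis Bclos : forall b c (k : C), b \in B -> c \in B -> b + k *: c \in B.
Hypothesis BM : forall b c, b \in B -> c \in B -> b * c \in B.
Hypothesis Bco : forall b, b \in B -> exists t, teq (Delta b) t /\ tin_left B t.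

Lemma main_sec : in_BRep st Delta eps S B (W := A) B (fun b v => b * v) Delta
    (fun b b' => Phi (st b * b')).
Proof.
rewrite /in_BRep /=; split.
- split; last exact: Bclos.
  by have := Bclos (-1) B1 B1; rewrite scaleN1r subrr.
- split.
  + by move=> b v hb hv; exact: BM.
  + by move=> b v w k _ _ _; rewrite mulrDr scalerAr.
  + by move=> b c v k _ _ _; rewrite mulrDl scalerAl.
  + by move=> v _; exact: mul1r.
  + by move=> b c v _ _ _; rewrite mulrA.
- split.
  + move=> v hv; have [t [Ht Hin]] := Bco hv; exists t; split => //; exact: teq_sym.
  + by move=> v w k _ _; exact: DL.
  + move=> v t f g h hv [Ht _].
    have e1 := Ht (mkS (tevD_lin f g)) h.
    have e2 := Ht f (mkS (tevD_lin g h)).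
    rewrite /tev /mkS /mkSf in e1 e2.
    have := CA v f g h; rewrite /tev => e3.
    by rewrite e1 e2 e3.
  + move=> v t hv [Ht _]; apply: (sep PhiL faith) => g.
    have e := Ht g (mkS eL); rewrite /tev /mkS /mkSf in e.
    transitivity (\sum_(p <- t) g p.1 * eps p.2).
      by rewrite linear_sum; apply: eq_bigr => p _; rewrite linearZ /= mulrC.
    rewrite e -[in RHS](cnt2 v) linear_sum; apply: eq_bigr => p _.
    by rewrite linearZ /= mulrC.
- move=> b v tb tv hb hv Htb _ [Htv _].
  apply: teq_trans (DM b v) _; apply: teq_pairs; exact: teq_sym.
- split.
  + split.
    * by move=> u v w k _ _ _; exact: (ip_lin st PhiL).
    * by move=> v w _ _; exact: (CS PhiL stL Phipos).
    * move=> v _ nv; rewrite lt_def Phipos andbT.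
      by apply: contra_neq nv; exact: faith.
  + by move=> b v w _ _ _; rewrite stM stK mulrA.
  + move=> v w tv tw _ _ [Hv _] [Hw _]; rewrite /dagger.
    exact: Kvec.
Qed.

End Hopf.

Theorem mainTheorem9 (C : numClosedFieldType) (A : algType C)
  (st : A -> A) (Delta : A -> tensor A A) (eps : A -> C) (S : A -> A)
  (Phi : A -> C) (B : {pred A}) :
  is_CQG_Hopf_star st Delta eps S Phi ->
  is_right_coideal_star_subalg st Delta B ->
  in_BRep st Delta eps S B (W := A) B (fun b v => b * v) Delta
    (fun b b' => Phi (st b * b')).
Proof.
move=> [[[DL D1 DM] CA [eL e1 eM c1' c2] [SL a1 a2]] [stK stL stM Dst]
        [PhiL Phi1 Phipos] faith [HL HR]] [B1 Bclos BM Bst Bco].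
by apply: main_sec.
Qed.
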